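(* Fix $\ell\geq2$, let $A=\ell\times\omega$, and fix a recursive bijection $\psi:(\ell-1)\times\omega\times\omega\to\omega$. For $\alpha\in\{0,1\}^\omega$ define $S_\alpha$ on $A$ by: $S_\alpha(a,b)$ holds iff $a=(i,n)$, $b=(i+1,m)$ for some $i<\ell-1$ with $\alpha_{\psi(i,n,m)}=1$. If $\alpha$ is a Kolmogorov–Chaitin complex string, then the ranked diagram $(A,S_\alpha)$, with levels $L_j=\{j\}\times\omega$, is $\ell$-generic, i.e. $\langle A,S_\alpha,\{0\}\times\omega,\ldots,\{\ell-1\}\times\omega\rangle$ is a model of $T_\ell$.
   Context: The signature has unary relations $L_0,\ldots,L_{\ell-1}$ and binary $S$. The theory $T_\ell$: (i) every $x$ satisfies some $L_j(x)$; (ii) no $x$ satisfies $L_i(x)\wedge L_j(x)$ for $i<j$; (iii) $S(x,y)$ and $L_i(x)$ with $i\le\ell-2$ imply $L_{i+1}(y)$; (iv) for each $i<\ell$ and all finite $X,Y\subseteq L_{i+1}$ with $X\cap Y=\emptyset$, $Z\subseteq L_i$, $X',Y'\subseteq L_{i-1}$ with $X'\cap Y'=\emptyset$ ($L_{-1},L_\ell$ read as empty), there is $z\in L_i\setminus Z$ with $S(z,x)$ for $x\in X$, $S(x',z)$ for $x'\in X'$, $\neg S(z,y)$ for $y\in Y$, $\neg S(y',z)$ for $y'\in Y'$. For $\alpha\in\{0,1\}^\omega$, $\overline{\alpha}(n)=\alpha_0\cdots\alpha_{n-1}$. Let $H(s)$ be the prefix-free Kolmogorov complexity of a binary word $s$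 relative to a fixed universal prefix algorithm. $\alpha$ is Kolmogorov–Chaitin complex if $\exists m\,\forall n\;H(\overline{\alpha}(n))\ge n-m$. *)

(* Defs.v *)
From mathcomp Require Import all_boot.
From Stdlib Require Import List.
Set Implicit Arguments. Unset Strict Implicit. Unset Printing Implicit Defensive.

(* Untyped syntax acting on argument lists; every term denotes a partial
   recursive function and every partial recursive function is denoted. *)
Inductive term : Type :=
| Zero
| Succ
| Proj (i : nat)
| Comp (f : term) (gs : list term)
| Rec (f g : term)
| Mu (f : term).

Inductive eval : term -> list nat -> nat -> Prop :=
| eZero xs : eval Zero xs 0
| eSucc x xs : eval Succ (x :: xs) x.+1
| eProj i xs : eval (Proj i) xs (List.nth i xs 0)
| eComp f gs xs ys y : evals gs xs ys -> eval f ys y -> eval (Comp f gs) xs y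
| eRec0 f g xs y : eval f xs y -> eval (Rec f g) (0 :: xs) y
| eRecS f g n xs r y :
    eval (Rec f g) (n :: xs) r -> eval g (n :: r :: xs) y ->
    eval (Rec f g) (n.+1 :: xs) y
| eMu f xs n :
    eval f (n :: xs) 0 ->
    (forall m, m < n -> exists k, eval f (m :: xs) k.+1) ->
    eval (Mu f) xs n
with evals : list term -> list nat -> list nat -> Prop :=
| esNil xs : evals nil xs nil
| esCons g gs xs y ys : eval g xs y -> evals gs xs ys -> evals (g :: gs) xs (y :: ys).

(* bijective coding of binary words by naturals *)
Fixpoint code (s : list bool) : nat :=
  match s with
  | nil => 0
  | b :: s' => (code s').*2 + (if b then 2 else 1)
  end.

Definition runs (t : term) (p s : list bool) : Prop := eval t [:: code p] (code s).

Definition prefix_free (t : term) : Prop :=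
  forall p q s s', runs t p s -> runs t q s' -> (exists r, q = p ++ r) -> p = q.

Definition universal_prefix (U : term) : Prop :=
  prefix_free U /\
  forall M, prefix_free M ->
    exists rho : list bool, forall p s, runs M p s <-> runs U (rho ++ p) s.

(* "H_U(s) >= k", H_U(s) = min { |p| : U(p) = s } *)
Definition H_ge (U : term) (s : list bool) (k : nat) : Prop :=
  forall p, runs U p s -> k <= size p.

Definition prefix (alpha : nat -> bool) (n : nat) : list bool :=
  List.map alpha (List.seq 0 n).

Definition KC_complex (U : term) (alpha : nat -> bool) : Prop :=
  exists m, forall n, H_ge U (prefix alpha n) (n - m).

(* L j x : x in level L_j (only used for j < l) *)

Definition below {A : Type} (L : nat -> A -> Prop) (i : nat) (x : A) : Prop :=
  match i with 0 => False | i'.+1 => L i' x end.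
Definition above {A : Type} (l : nat) (L : nat -> A -> Prop) (i : nat) (x : A) : Prop :=
  i.+1 < l /\ L i.+1 x.

Definition disjoint_l {A : Type} (X Y : list A) : Prop :=
  forall x, List.In x X -> ~ List.In x Y.

Definition model_T (l : nat) (A : Type) (L : nat -> A -> Prop) (S : A -> A -> Prop) : Prop :=
  (forall x, exists j, j < l /\ L j x) /\
  (forall x i j, i < j -> j < l -> ~ (L i x /\ L j x)) /\
  (forall x y i, S x y -> L i x -> i <= l - 2 -> L i.+1 y) /\
  (forall i, i < l ->
     forall X Y Z X' Y' : list A,
       (forall x, List.In x X -> above l L i x) ->
       (forall x, List.In x Y -> above l L i x) ->
       disjoint_l X Y ->
       (forall x, List.In x Z -> L i x) ->
       (forall x, List.In x X' -> below L i x) ->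
       (forall x, List.In x Y' -> below L i x) ->
       disjoint_l X' Y' ->
       exists z, L i z /\ ~ List.In z Z /\
         (forall x, List.In x X -> S z x) /\
         (forall x, List.In x X' -> S x z) /\
         (forall y, List.In y Y -> ~ S z y) /\
         (forall y, List.In y Y' -> ~ S y z)).

Definition A_l (l : nat) : Type := ('I_l * nat)%type.

Definition level (l : nat) (j : nat) (a : A_l l) : Prop := nat_of_ord a.1 = j.

Definition S_alpha (l : nat) (psi : nat -> nat -> nat -> nat) (alpha : nat -> bool)
  (a b : A_l l) : Prop :=
  exists i, i < l.-1 /\ nat_of_ord a.1 = i /\ nat_of_ord b.1 = i.+1 /\
            alpha (psi i a.2 b.2) = true.

Definition recursive_bijection3 (l : nat) (psi : nat -> nat -> nat -> nat) : Prop :=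
  (exists t, forall i n m, i < l.-1 -> eval t [:: i; n; m] (psi i n m)) /\
  (forall i n m i' n' m', i < l.-1 -> i' < l.-1 ->
       psi i n m = psi i' n' m' -> [/\ i = i', n = n' & m = m']) /\
  (forall k, exists i n m, i < l.-1 /\ psi i n m = k).

(* Main.v *)
Require Import Defs.
From mathcomp Require Import all_boot zify.
Set Implicit Arguments. Unset Strict Implicit. Unset Printing Implicit Defensive.

Definition a (i : nat) (xs : list nat) : nat := List.nth i xs 0.
Definition Rf (f : list nat -> nat) := exists t, forall xs, eval t xs (f xs).
Definition Rfs (Fs : list (list nat -> nat)) :=
  exists ts, forall xs, evals ts xs (map (fun F => F xs) Fs).

Lemma Rf_ext f g : (forall xs, f xs = g xs) -> Rf f -> Rf g.
Proof. move=> E [t Ht]; exists t => xs; rewrite -E; exact: Ht. Qed.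

Lemma Rfs_nil : Rfs [::].
Proof. exists [::] => xs; constructor. Qed.
Lemma Rfs_cons F Fs : Rf F -> Rfs Fs -> Rfs (F :: Fs).
Proof. move=> [t Ht] [ts Hts]; exists (t :: ts) => xs /=; constructor; auto. Qed.

Lemma Rf_comp F Gs : Rf F -> Rfs Gs -> Rf (fun xs => F (map (fun G => G xs) Gs)).
Proof. move=> [t Ht] [ts Hts]; exists (Comp t ts) => xs; econstructor; eauto. Qed.

Fixpoint cst c := match c with 0 => Zero | c'.+1 => Comp Succ [:: cst c'] end.
Lemma Rf_const c : Rf (fun _ => c).
Proof. exists (cst c) => xs; elim: c => [|c IH] /=; [constructor|].
  econstructor; [econstructor; [exact IH|constructor]|constructor]. Qed.
Lemma Rf_proj i : Rf (a i).
Proof. exists (Proj i) => xs; exact: eProj. Qed.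
Lemma Rf_S G : Rf G -> Rf (fun xs => (G xs).+1).
Proof. move=> [t Ht]; exists (Comp Succ [:: t]) => xs.
  econstructor; [econstructor; [exact: Ht|constructor]|constructor]. Qed.

Lemma Rf_recL (h : nat -> list nat -> nat) B S N Ps :
  (forall ps, h 0 ps = B ps) -> (forall n ps, h n.+1 ps = S [:: n, h n ps & ps]) ->
  Rf B -> Rf S -> Rf N -> Rfs Ps -> Rf (fun xs => h (N xs) (map (fun P => P xs) Ps)).
Proof.
move=> h0 hS [tb Hb] [ts Hs] [tn Hn] [tp Hp].
exists (Comp (Rec tb ts) (tn :: tp)) => xs.
econstructor; first by constructor; [exact: Hn|exact: Hp].
elim: (N xs) => [|n IH]; first by rewrite h0; constructor.
rewrite hS; econstructor; [exact IH| exact: Hs].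
Qed.

Lemma Rf_app1 f G : Rf (fun xs => f (a 0 xs)) -> Rf G -> Rf (fun xs => f (G xs)).
Proof. move=> Hf HG. have := Rf_comp Hf (Rfs_cons HG Rfs_nil). exact: Rf_ext. Qed.
Lemma Rf_app2 f G1 G2 : Rf (fun xs => f (a 0 xs) (a 1 xs)) -> Rf G1 -> Rf G2 ->
  Rf (fun xs => f (G1 xs) (G2 xs)).
Proof. move=> Hf H1 H2. have := Rf_comp Hf (Rfs_cons H1 (Rfs_cons H2 Rfs_nil)). exact: Rf_ext. Qed.
Lemma Rf_app3 f G1 G2 G3 : Rf (fun xs => f (a 0 xs) (a 1 xs) (a 2 xs)) -> Rf G1 -> Rf G2 -> Rf G3 ->
  Rf (fun xs => f (G1 xs) (G2 xs) (G3 xs)).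
Proof. move=> Hf H1 H2 H3.
  have := Rf_comp Hf (Rfs_cons H1 (Rfs_cons H2 (Rfs_cons H3 Rfs_nil))). exact: Rf_ext. Qed.
Lemma Rf_app4 f G1 G2 G3 G4 : Rf (fun xs => f (a 0 xs) (a 1 xs) (a 2 xs) (a 3 xs)) -> Rf G1 -> Rf G2 -> Rf G3 -> Rf G4 ->
  Rf (fun xs => f (G1 xs) (G2 xs) (G3 xs) (G4 xs)).
Proof. move=> Hf H1 H2 H3 H4.
  have := Rf_comp Hf (Rfs_cons H1 (Rfs_cons H2 (Rfs_cons H3 (Rfs_cons H4 Rfs_nil)))). exact: Rf_ext. Qed.

Lemma Rf_rec0 (h : nat -> nat) b s :
  h 0 = b -> (forall n, h n.+1 = s n (h n)) ->
  Rf (fun xs => s (a 0 xs) (a 1 xs)) -> Rf (fun xs => h (a 0 xs)).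
Proof.
move=> h0 hS Hs.
have := @Rf_recL (fun n _ => h n) (fun _ => b) (fun ys => s (a 0 ys) (a 1 ys)) (a 0) [::] (fun _ => h0) (fun n _ => hS n) (Rf_const b) Hs (Rf_proj 0) Rfs_nil.
exact: Rf_ext.
Qed.
Lemma Rf_rec1 (h : nat -> nat -> nat) b s :
  (forall p, h 0 p = b p) -> (forall n p, h n.+1 p = s n (h n p) p) ->
  Rf (fun xs => b (a 0 xs)) -> Rf (fun xs => s (a 0 xs) (a 1 xs) (a 2 xs)) ->
  Rf (fun xs => h (a 0 xs) (a 1 xs)).
Proof.
move=> h0 hS Hb Hs.
have := @Rf_recL (fun n ps => h n (a 0 ps)) (fun ps => b (a 0 ps)) (fun ys => s (a 0 ys) (a 1 ys) (a 2 ys)) (a 0) [:: a 1] (fun ps => h0 _) (fun n ps => hS n _) Hb Hs (Rf_proj 0) (Rfs_cons (Rf_proj 1) Rfs_nil).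
exact: Rf_ext.
Qed.
Lemma Rf_rec2 (h : nat -> nat -> nat -> nat) b s :
  (forall p q, h 0 p q = b p q) -> (forall n p q, h n.+1 p q = s n (h n p q) p q) ->
  Rf (fun xs => b (a 0 xs) (a 1 xs)) -> Rf (fun xs => s (a 0 xs) (a 1 xs) (a 2 xs) (a 3 xs)) ->
  Rf (fun xs => h (a 0 xs) (a 1 xs) (a 2 xs)).
Proof.
move=> h0 hS Hb Hs.
have := @Rf_recL (fun n ps => h n (a 0 ps) (a 1 ps)) (fun ps => b (a 0 ps) (a 1 ps)) (fun ys => s (a 0 ys) (a 1 ys) (a 2 ys) (a 3 ys)) (a 0) [:: a 1; a 2] (fun ps => h0 _ _) (fun n ps => hS n _ _) Hb Hs (Rf_proj 0) (Rfs_cons (Rf_proj 1) (Rfs_cons (Rf_proj 2) Rfs_nil)).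
exact: Rf_ext.
Qed.

Lemma Rf_addL : Rf (fun xs => a 0 xs + a 1 xs).
Proof.
apply: (@Rf_rec1 (fun n p => n + p) id (fun _ r _ => r.+1)) => //.
- exact: Rf_proj.
- exact: (Rf_S (Rf_proj 1)).
Qed.
Lemma Rf_add G1 G2 : Rf G1 -> Rf G2 -> Rf (fun xs => G1 xs + G2 xs).
Proof. exact: Rf_app2 Rf_addL. Qed.
Lemma Rf_mulL : Rf (fun xs => a 0 xs * a 1 xs).
Proof.
apply: (@Rf_rec1 (fun n p => n * p) (fun _ => 0) (fun _ r p => p + r)).
- by [].
- move=> n p; by rewrite mulSn.
- exact: Rf_const.
- exact: Rf_add (Rf_proj 2) (Rf_proj 1).
Qed.
Lemma Rf_mul G1 G2 : Rf G1 -> Rf G2 -> Rf (fun xs => G1 xs * G2 xs).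
Proof. exact: Rf_app2 Rf_mulL. Qed.
Lemma Rf_predL : Rf (fun xs => (a 0 xs).-1).
Proof. by apply: (@Rf_rec0 (fun n => n.-1) 0 (fun n _ => n)) => //; exact: Rf_proj. Qed.
Lemma Rf_pred G : Rf G -> Rf (fun xs => (G xs).-1).
Proof. exact: Rf_app1 Rf_predL. Qed.
Lemma Rf_subL : Rf (fun xs => a 1 xs - a 0 xs).
Proof.
apply: (@Rf_rec1 (fun n p => p - n) id (fun _ r _ => r.-1)).
- by move=> p; rewrite subn0.
- by move=> n p; rewrite subnS.
- exact: Rf_proj.
- exact: Rf_pred (Rf_proj 1).
Qed.
Lemma Rf_sub G1 G2 : Rf G1 -> Rf G2 -> Rf (fun xs => G1 xs - G2 xs).
Proof. move=> H1 H2. exact: (@Rf_app2 (fun x y => y - x) G2 G1 Rf_subL). Qed.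
Definition ifz (c x y : nat) := if c is 0 then y else x.
Lemma Rf_ifzL : Rf (fun xs => ifz (a 0 xs) (a 1 xs) (a 2 xs)).
Proof. by apply: (@Rf_rec2 (fun c x y => ifz c x y) (fun x y => y) (fun _ _ x y => x)) => //;
  exact: Rf_proj. Qed.
Lemma Rf_ifz G1 G2 G3 : Rf G1 -> Rf G2 -> Rf G3 -> Rf (fun xs => ifz (G1 xs) (G2 xs) (G3 xs)).
Proof. exact: Rf_app3 Rf_ifzL. Qed.
Lemma Rf_ltb G1 G2 : Rf G1 -> Rf G2 -> Rf (fun xs => nat_of_bool (G1 xs < G2 xs)).
Proof. move=> H1 H2. apply: (Rf_ext _ (Rf_ifz (Rf_sub H2 H1) (Rf_const 1) (Rf_const 0))) => xs.
  rewrite /ifz. case: (ltnP (G1 xs) (G2 xs)) => h.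
  - by rewrite -subn_gt0 in h; case: (G2 xs - G1 xs) h.
  - by rewrite -subn_eq0 in h; rewrite (eqP h). Qed.
Lemma Rf_eqb G1 G2 : Rf G1 -> Rf G2 -> Rf (fun xs => nat_of_bool (G1 xs == G2 xs)).
Proof. move=> H1 H2.
  apply: (Rf_ext _ (Rf_ifz (Rf_add (Rf_sub H1 H2) (Rf_sub H2 H1)) (Rf_const 0) (Rf_const 1))) => xs.
  rewrite /ifz. case: eqP => h.
  - by rewrite h subnn.
  - case E: (_ + _) => //. exfalso; apply: h. lia. Qed.
Lemma Rf_if B G1 G2 : Rf (fun xs => nat_of_bool (B xs)) -> Rf G1 -> Rf G2 ->
  Rf (fun xs => if B xs then G1 xs else G2 xs).
Proof. move=> HB H1 H2. apply: (Rf_ext _ (Rf_ifz HB H1 H2)) => xs. by case: (B xs). Qed.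
Lemma Rf_andb B1 B2 : Rf (fun xs => nat_of_bool (B1 xs)) -> Rf (fun xs => nat_of_bool (B2 xs)) ->
  Rf (fun xs => nat_of_bool (B1 xs && B2 xs)).
Proof. move=> H1 H2. apply: (Rf_ext _ (Rf_mul H1 H2)) => xs. by case: (B1 xs); case: (B2 xs). Qed.
Lemma Rf_negb B1 : Rf (fun xs => nat_of_bool (B1 xs)) -> Rf (fun xs => nat_of_bool (~~ B1 xs)).
Proof. move=> H1. apply: (Rf_ext _ (Rf_sub (Rf_const 1) H1)) => xs. by case: (B1 xs). Qed.
Lemma Rf_powL : Rf (fun xs => a 1 xs ^ a 0 xs).
Proof.
apply: (@Rf_rec1 (fun n p => p ^ n) (fun _ => 1) (fun _ r p => p * r)).
- by move=> p; rewrite expn0.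
- by move=> n p; rewrite expnS.
- exact: Rf_const.
- exact: Rf_mul (Rf_proj 2) (Rf_proj 1).
Qed.
Lemma Rf_pow G1 G2 : Rf G1 -> Rf G2 -> Rf (fun xs => G1 xs ^ G2 xs).
Proof. move=> H1 H2. exact: (@Rf_app2 (fun x y => y ^ x) G2 G1 Rf_powL). Qed.

Lemma modS_eq m d : m.+1 %% d = if (m %% d).+1 == d then 0 else (m %% d).+1.
Proof. case: d => [|d]; first by rewrite !modn0.
  move: (ltn0Sn d); move: d.+1 => {}d d0.
  rewrite {1}(divn_eq m d) -addnS. case: eqP => h.
  - by rewrite h -mulSnr modnMl.
  - rewrite modnMDl modn_small //. have := ltn_pmod m d0. move: h. set r := m %% d. lia. Qed.
Lemma divS_eq m d : m.+1 %/ d = (m %/ d) + ((m %% d).+1 == d).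
Proof. case: d => [|d]; first by rewrite !divn0 modn0.
  move: (ltn0Sn d); move: d.+1 => {}d d0.
  rewrite {1}(divn_eq m d) -addnS. case: eqP => h /=.
  - by rewrite h -mulSnr mulnK // addn1.
  - have := ltn_pmod m d0. move: h. set r := m %% d. set q := m %/ d. move=> h1 h2.
    rewrite divnMDl // (divn_small (_ : r.+1 < d)) ?addn0 //. lia. Qed.

Lemma Rf_modL : Rf (fun xs => a 0 xs %% a 1 xs).
Proof.
apply: (@Rf_rec1 (fun n d => n %% d) (fun _ => 0) (fun _ r d => if r.+1 == d then 0 else r.+1)).
- by move=> p; rewrite mod0n.
- by move=> n p; rewrite modS_eq.
- exact: Rf_const.
- apply: Rf_if; [apply: Rf_eqb; [apply: Rf_S|]|apply: Rf_const|apply: Rf_S]; exact: Rf_proj.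
Qed.
Lemma Rf_mod G1 G2 : Rf G1 -> Rf G2 -> Rf (fun xs => G1 xs %% G2 xs).
Proof. exact: Rf_app2 Rf_modL. Qed.
Lemma Rf_divL : Rf (fun xs => a 0 xs %/ a 1 xs).
Proof.
apply: (@Rf_rec1 (fun n d => n %/ d) (fun _ => 0) (fun n r d => r + ((n %% d).+1 == d))).
- by move=> p; rewrite div0n.
- by move=> n p; rewrite divS_eq.
- exact: Rf_const.
- apply: Rf_add; [exact: Rf_proj|]. apply: Rf_eqb; [apply: Rf_S; apply: Rf_mod|]; exact: Rf_proj.
Qed.
Lemma Rf_div G1 G2 : Rf G1 -> Rf G2 -> Rf (fun xs => G1 xs %/ G2 xs).
Proof. exact: Rf_app2 Rf_divL. Qed.
Lemma Rf_odd G : Rf G -> Rf (fun xs => nat_of_bool (odd (G xs))).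
Proof. move=> H. apply: (Rf_ext _ (Rf_mod H (Rf_const 2))) => xs. by rewrite modn2. Qed.

Fixpoint bsum (f : nat -> nat) n := if n is n'.+1 then bsum f n' + f n' else 0.
Lemma Rf_bsumL (f : nat -> nat -> nat) : Rf (fun xs => f (a 0 xs) (a 1 xs)) ->
  Rf (fun xs => bsum (fun z => f z (a 1 xs)) (a 0 xs)).
Proof. move=> Hf.
apply: (@Rf_rec1 (fun n y => bsum (fun z => f z y) n) (fun _ => 0) (fun n r y => r + f n y)) => //.
- exact: Rf_const.
- apply: Rf_add; first exact: Rf_proj. exact: (Rf_app2 Hf (Rf_proj 0) (Rf_proj 2)).
Qed.
Lemma Rf_bsum (f : nat -> nat -> nat) G1 G2 : Rf (fun xs => f (a 0 xs) (a 1 xs)) -> Rf G1 -> Rf G2 ->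
  Rf (fun xs => bsum (fun z => f z (G2 xs)) (G1 xs)).
Proof. move=> Hf H1 H2. exact: (@Rf_app2 (fun n y => bsum (fun z => f z y) n) G1 G2 (Rf_bsumL Hf)). Qed.

Fixpoint find_lt (p : nat -> bool) n :=
  if n is n'.+1 then (if find_lt p n' < n' then find_lt p n' else if p n' then n' else n) else 0.
Lemma find_lt_le p n : find_lt p n <= n.
Proof. elim: n => //= n IH. case: ifP => h; first by apply: ltnW.
  case: ifP => //. Qed.
Lemma find_ltP p n : find_lt p n < n -> p (find_lt p n).
Proof. elim: n => //= n IH. case: ifP => h; first by move=> _; apply: IH.
  case: ifP => pn; first by []. by rewrite ltnn. Qed.
Lemma find_lt_ex (p : nat -> bool) n z : z < n -> p z -> find_lt p n < n.
Proof. elim: n => //= n IH. rewrite ltnS leq_eqVlt => /orP [/eqP ->|zn] pz.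
  - case: ifP => h; first by apply: ltnW. by rewrite pz.
  - have h := IH zn pz. rewrite h. exact: ltnW. Qed.
Lemma Rf_findL (P : nat -> nat -> bool) : Rf (fun xs => nat_of_bool (P (a 0 xs) (a 1 xs))) ->
  Rf (fun xs => find_lt (fun z => P z (a 1 xs)) (a 0 xs)).
Proof. move=> Hf.
apply: (@Rf_rec1 (fun n y => find_lt (fun z => P z y) n) (fun _ => 0)
   (fun n r y => if r < n then r else if P n y then n else n.+1)) => //.
- exact: Rf_const.
- apply: Rf_if; [apply: Rf_ltb; exact: Rf_proj|exact: Rf_proj|].
  apply: Rf_if; [exact: (@Rf_app2 (fun x y => nat_of_bool (P x y)) (a 0) (a 2) Hf (Rf_proj 0) (Rf_proj 2))|exact: Rf_proj|apply: Rf_S; exact: Rf_proj].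
Qed.
Lemma Rf_find (P : nat -> nat -> bool) G1 G2 : Rf (fun xs => nat_of_bool (P (a 0 xs) (a 1 xs))) -> Rf G1 -> Rf G2 ->
  Rf (fun xs => find_lt (fun z => P z (G2 xs)) (G1 xs)).
Proof. move=> Hf H1 H2. exact: (@Rf_app2 (fun n y => find_lt (fun z => P z y) n) G1 G2 (Rf_findL Hf)). Qed.

Lemma Rf_leb G1 G2 : Rf G1 -> Rf G2 -> Rf (fun xs => nat_of_bool (G1 xs <= G2 xs)).
Proof. move=> H1 H2. apply: (Rf_ext _ (Rf_ltb H1 (Rf_S H2))) => xs. by rewrite ltnS. Qed.
Ltac rf_user := fail.
Ltac rf := repeat first
  [ exact: Rf_const | exact: Rf_proj | eassumption
  | apply: Rf_mod | apply: Rf_div | apply: Rf_pow | apply: Rf_mul | apply: Rf_add | apply: Rf_sub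
  | apply: Rf_odd | apply: Rf_eqb | apply: Rf_ltb | apply: Rf_leb | apply: Rf_andb | apply: Rf_negb
  | rf_user | apply: Rf_S | apply: Rf_pred | apply: Rf_if ].

Definition tl x := x.-1 %/ 2.
Definition tln y x := iter y tl x.

Lemma Rf_tln G1 G2 : Rf G1 -> Rf G2 -> Rf (fun xs => tln (G1 xs) (G2 xs)).
Proof. move=> H1 H2.
apply: (@Rf_app2 tln G1 G2) => //.
apply: (@Rf_rec1 tln id (fun _ r _ => tl r)) => //.
- exact: Rf_proj.
- rewrite /tl; rf.
Qed.

Section Dec.
Variables (k N wv : nat) (posf : nat -> nat -> nat).
Hypothesis Hpos : Rf (fun xs => posf (a 0 xs) (a 1 xs)).

Definition aa := 2 ^ k - 1.
Definition sj j := j.*2.+2.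
Definition Gj j := aa * (2 ^ sj j - 1).
Definition pz z := posf (N + z %/ k) (z %% k).
Definition Lj j := (bsum pz (Gj j * k)).+1.
Definition Fj j := Lj j - sj j.
Definition jx x := find_lt (fun y => odd (tln y x)) x.+1.
Definition cqx x := tln (jx x).+1 x.
Definition valid x := odd (tln (jx x) x) && (2 ^ Fj (jx x) - 1 <= cqx x) && (cqx x < 2 ^ (Fj (jx x)).+1 - 1).
Definition Nnx x := cqx x - (2 ^ Fj (jx x) - 1).
Definition idx G y := find_lt (fun z => pz z == y) (G * k).
Definition cov G y := idx G y < G * k.
Definition uu G y := bsum (fun y' => nat_of_bool (~~ cov G y')) y.
Definition undig d := if d < wv then d else d.+1.
Definition bitv G Nn y :=
  if cov G y then (undig ((Nn %% aa ^ G) %/ aa ^ (idx G y %/ k) %% aa) %/ 2 ^ (idx G y %% k)) %% 2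
  else ((Nn %/ aa ^ G) %/ 2 ^ (uu G y)) %% 2.
Definition bitx x y := bitv (Gj (jx x)) (Nnx x) y.
Fixpoint outh s x := if s is s'.+1 then (outh s' x).*2 + 1 + bitx x (Lj (jx x) - s) else 0.
Definition dec x := outh (Lj (jx x)) x.

Lemma Rf_pz G : Rf G -> Rf (fun xs => pz (G xs)).
Proof. move=> H. rewrite /pz.
apply: (@Rf_app2 posf (fun xs => N + G xs %/ k) (fun xs => G xs %% k)); rf. Qed.
Lemma Rf_Gj G : Rf G -> Rf (fun xs => Gj (G xs)).
Proof. move=> H; rewrite /Gj /sj. apply: Rf_mul; first exact: Rf_const. rf.
  apply: (Rf_ext _ (Rf_add H H)) => xs; by rewrite -addnn. Qed.
Lemma Rf_Lj G : Rf G -> Rf (fun xs => Lj (G xs)).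
Proof. move=> H; rewrite /Lj. apply: Rf_S.
  apply: (@Rf_bsum (fun z _ => pz z) (fun xs => Gj (G xs) * k) (fun _ => 0)).
  - exact: Rf_pz (Rf_proj 0).
  - apply: Rf_mul; [exact: Rf_Gj|exact: Rf_const].
  - exact: Rf_const. Qed.
Lemma Rf_sj G : Rf G -> Rf (fun xs => sj (G xs)).
Proof. move=> H; rewrite /sj. rf. apply: (Rf_ext _ (Rf_add H H)) => xs; by rewrite -addnn. Qed.
Lemma Rf_Fj G : Rf G -> Rf (fun xs => Fj (G xs)).
Proof. move=> H; rewrite /Fj. apply: Rf_sub; [exact: Rf_Lj|exact: Rf_sj]. Qed.
Lemma Rf_jx G : Rf G -> Rf (fun xs => jx (G xs)).
Proof. move=> H; rewrite /jx.
  apply: (@Rf_find (fun y x => odd (tln y x)) (fun xs => (G xs).+1) G) => //.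
  - apply: Rf_odd; apply: Rf_tln; exact: Rf_proj.
  - exact: Rf_S. Qed.
Lemma Rf_cqx G : Rf G -> Rf (fun xs => cqx (G xs)).
Proof. move=> H; rewrite /cqx. apply: Rf_tln => //. apply: Rf_S; exact: Rf_jx. Qed.
Ltac rf_user ::= first [apply: Rf_tln | apply: Rf_pz | apply: Rf_Gj | apply: Rf_Lj | apply: Rf_sj | apply: Rf_Fj | apply: Rf_jx | apply: Rf_cqx].
Lemma Rf_valid G : Rf G -> Rf (fun xs => nat_of_bool (~~ valid (G xs))).
Proof. move=> H; rewrite /valid. rf. Qed.
Lemma Rf_idx G1 G2 : Rf G1 -> Rf G2 -> Rf (fun xs => idx (G1 xs) (G2 xs)).
Proof. move=> H1 H2. rewrite /idx.
  apply: (@Rf_find (fun z y => pz z == y) (fun xs => G1 xs * k) G2); rf. Qed.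
Lemma Rf_double G : Rf G -> Rf (fun xs => (G xs).*2).
Proof. move=> H. apply: (Rf_ext _ (Rf_add H H)) => xs. by rewrite addnn. Qed.
Ltac rf_user ::= first [apply: Rf_tln | apply: Rf_pz | apply: Rf_Gj | apply: Rf_Lj | apply: Rf_sj | apply: Rf_Fj | apply: Rf_jx | apply: Rf_cqx | apply: Rf_idx | apply: Rf_double].
Lemma Rf_cov G1 G2 : Rf G1 -> Rf G2 -> Rf (fun xs => nat_of_bool (cov (G1 xs) (G2 xs))).
Proof. move=> H1 H2. rewrite /cov. rf. Qed.
Lemma Rf_uu G1 G2 : Rf G1 -> Rf G2 -> Rf (fun xs => uu (G1 xs) (G2 xs)).
Proof. move=> H1 H2. rewrite /uu.
  apply: (@Rf_bsum (fun z g => nat_of_bool (~~ cov g z)) G2 G1) => //.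
  apply: Rf_negb. exact: Rf_cov (Rf_proj 1) (Rf_proj 0). Qed.
Lemma Rf_undig G : Rf G -> Rf (fun xs => undig (G xs)).
Proof. move=> H. rewrite /undig. rf. Qed.
Ltac rf_user ::= first [apply: Rf_tln | apply: Rf_pz | apply: Rf_Gj | apply: Rf_Lj | apply: Rf_sj | apply: Rf_Fj | apply: Rf_jx | apply: Rf_cqx | apply: Rf_idx | apply: Rf_double
   | apply: Rf_cov | apply: Rf_uu | apply: Rf_undig].
Lemma Rf_bitv G1 G2 G3 : Rf G1 -> Rf G2 -> Rf G3 -> Rf (fun xs => bitv (G1 xs) (G2 xs) (G3 xs)).
Proof. move=> H1 H2 H3. rewrite /bitv. rf. Qed.
Lemma Rf_Nnx G : Rf G -> Rf (fun xs => Nnx (G xs)).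
Proof. move=> H. rewrite /Nnx. rf. Qed.
Lemma Rf_bitx G1 G2 : Rf G1 -> Rf G2 -> Rf (fun xs => bitx (G1 xs) (G2 xs)).
Proof. move=> H1 H2. rewrite /bitx. apply: Rf_bitv => //; [apply: Rf_Gj; apply: Rf_jx|apply: Rf_Nnx]; done. Qed.
Lemma Rf_dec : Rf (fun xs => dec (a 0 xs)).
Proof.
have H : Rf (fun xs => outh (a 0 xs) (a 1 xs)).
  apply: (@Rf_rec1 outh (fun _ => 0) (fun s r x => r.*2 + 1 + bitx x (Lj (jx x) - s.+1))) => //.
  - exact: Rf_const.
  - apply: Rf_add; [rf|apply: Rf_bitx; rf].
rewrite /dec. apply: (@Rf_app2 outh (fun xs => Lj (jx (a 0 xs))) (a 0) H); rf.
Qed.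
End Dec.
From mathcomp Require Import all_boot.
Set Implicit Arguments. Unset Strict Implicit.

Fixpoint eval_det t xs y (D : eval t xs y) {struct D} : forall y', eval t xs y' -> y = y'
with evals_det gs xs ys (D : evals gs xs ys) {struct D} : forall ys', evals gs xs ys' -> ys = ys'.
Proof.
- destruct D as [xs|x xs|i xs|f gs xs ys y Hs Hf|f g xs y Hf|f g n xs r y Hr Hg|f xs n H0 Hlt];
    intros y' D'; inversion D'; subst; try reflexivity.
  + match goal with H: evals gs xs ?b |- _ => have E := evals_det _ _ _ Hs _ H end. subst.
    match goal with H: eval f _ y' |- _ => exact: (eval_det _ _ _ Hf _ H) end.
  + match goal with H: eval f _ y' |- _ => exact: (eval_det _ _ _ Hf _ H) end.
  + match goal with H: eval (Rec f g) _ ?b |- _ => have E := eval_det _ _ _ Hr _ H end. subst.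
    match goal with H: eval g _ y' |- _ => exact: (eval_det _ _ _ Hg _ H) end.
  + case: (ltngtP n y') => // [lt|lt].
    * have [k Hk] := H2 _ lt. have := eval_det _ _ _ H0 _ Hk. by [].
    * destruct (Hlt _ lt) as [k Hk]. have := eval_det _ _ _ Hk _ H1. by [].
- destruct D as [xs|g gs xs y ys Hg Hs]; intros ys' D'; inversion D'; subst; try reflexivity.
  match goal with H: eval g xs ?b, H2: evals gs xs ?c |- _ =>
  have E1 := eval_det _ _ _ Hg _ H; have E2 := evals_det _ _ _ Hs _ H2 end. by subst.
Qed.
Lemma inv_comp f gs xs y : eval (Comp f gs) xs y -> exists ys, evals gs xs ys /\ eval f ys y.
Proof. move=> E; inversion E; subst; eauto. Qed.
Lemma inv_cons g gs xs ys : evals (g :: gs) xs ys -> exists y ys', [/\ ys = y :: ys', eval g xs y & evals gs xs ys'].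
Proof. move=> E; inversion E; subst; do 2 eexists; split; eauto. Qed.
Lemma inv_nil xs ys : evals [::] xs ys -> ys = [::].
Proof. move=> E; inversion E; subst; eauto. Qed.
Lemma inv_mu f xs n : eval (Mu f) xs n -> eval f (n :: xs) 0 /\ (forall m, m < n -> exists k, eval f (m :: xs) k.+1).
Proof. move=> E; inversion E; subst; eauto. Qed.
Lemma inv_proj i xs y : eval (Proj i) xs y -> y = List.nth i xs 0.
Proof. move=> E; inversion E; subst; eauto. Qed.
Section M.
Variables (k N wv : nat) (posf : nat -> nat -> nat).
Hypothesis Hpos : Rf (fun xs => posf (a 0 xs) (a 1 xs)).

Lemma exists_M : exists M, forall x y, eval M [:: x] y <-> valid k N posf x /\ y = dec k N wv posf x.
Proof.
have [td Hd] := @Rf_dec k N wv posf Hpos.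
have [tc Hc] := @Rf_valid k N posf Hpos _ (Rf_proj 0).
have [ta Ha] := Rf_addL.
exists (Comp ta [:: td; Mu (Comp tc [:: Proj 1])]) => x y; split.
- move=> /inv_comp [ys [/inv_cons [y1 [ys1 [-> E1 /inv_cons [y2 [ys2 [-> E2 /inv_nil ->]]]]]] E3]].
  move/inv_mu: E2 => [/inv_comp [zs [/inv_cons [z1 [zs1 [-> /inv_proj -> /inv_nil ->]]] E4]] Hlt].
  have := eval_det (Hc [:: x]) E4. rewrite /a /=. case V: (valid _ _ _ _) => //= _.
  have := eval_det (Hd [:: x]) E1. rewrite /a /= => ?; subst y1.
  have := eval_det (Ha [:: dec k N wv posf x; y2]) E3. rewrite /a /=.
  have -> : y2 = 0.
    case: y2 Hlt {E3 E4} => // y2 /(_ 0 (ltn0Sn _)) [k0 /inv_comp [zs' [/inv_cons [z1' [zs1' [-> /inv_proj -> /inv_nil ->]]] E5]]].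
    have := eval_det (Hc [:: x]) E5. by rewrite /a /= V.
  by rewrite addn0 => <-.
- move=> [V ->].
  have hm : eval (Mu (Comp tc [:: Proj 1])) [:: x] 0.
    apply: eMu; last by [].
    apply: (@eComp _ _ _ [:: x]); first by constructor; [exact: eProj|constructor].
    have := Hc [:: x]. by rewrite /a /= V.
  apply: (@eComp _ _ _ [:: dec k N wv posf x; 0]).
  + constructor; first exact: Hd. constructor; [exact hm|constructor].
  + have h := Ha [:: dec k N wv posf x; 0]. rewrite /a /= addn0 in h. exact h.
Qed.
End M.
Lemma tl_code b s : tl (code (b :: s)) = code s.
Proof. rewrite /tl /=. case: b; rewrite -?addnn; lia. Qed.
Lemma tl0 : tl 0 = 0. Proof. by []. Qed.
Lemma odd_code b s : odd (code (b :: s)) = ~~ b.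
Proof. rewrite /= oddD odd_double. by case: b. Qed.
Lemma tln_code y p : tln y (code p) = code (drop y p).
Proof. elim: y p => [|y IH] p; first by rewrite drop0.
  rewrite /tln iterSr. case: p => [|b p] /=; first by rewrite tl0 -/(tln y 0) (IH [::]).
  by rewrite tl_code -/(tln y _) IH. Qed.
Lemma code_bounds s : 2 ^ size s - 1 <= code s < 2 ^ (size s).+1 - 1.
Proof. elim: s => [|b s IH] //=. move: IH. rewrite !expnS. set c := code s. set e := 2 ^ size s.
  have : 0 < e by rewrite expn_gt0. case: b; rewrite -addnn. all: lia. Qed.
Lemma code_size s : size s <= code s.
Proof. have := code_bounds s. have := ltn_expl (size s) (ltnSn 1). lia. Qed.
Lemma code_exists F n : n < 2 ^ F -> exists q, size q = F /\ code q = 2 ^ F - 1 + n.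
Proof. elim: F n => [|F IH] n.
  - move=> hn. have -> : n = 0 by move: hn; rewrite expn0; lia. by exists [::].
  - move=> hn. have [q [hs hc]] : exists q, size q = F /\ code q = 2 ^ F - 1 + n./2.
      apply: IH. rewrite expnS in hn. rewrite -divn2 ltn_divLR //. lia.
    exists (odd n :: q); split; first by rewrite /= hs.
    rewrite /= hc expnS. have := odd_double_half n. have : 0 < 2 ^ F by rewrite expn_gt0.
    case: (odd n) => /=; rewrite -!addnn; lia.
Qed.
Lemma size_of_code q F : 2 ^ F - 1 <= code q < 2 ^ F.+1 - 1 -> size q = F.
Proof. move=> /andP [h1 h2]. have := code_bounds q. move=> /andP [h3 h4].
  case: (ltngtP (size q) F) => // h.
  - have : 2 ^ (size q).+1 <= 2 ^ F by rewrite leq_exp2l.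
    have : 0 < 2 ^ (size q).+1 by rewrite expn_gt0. lia.
  - have : 2 ^ F.+1 <= 2 ^ size q by rewrite leq_exp2l.
    have : 0 < 2 ^ F.+1 by rewrite expn_gt0. lia.
Qed.
Lemma find_lt_min (p : nat -> bool) n y : y < find_lt p n -> ~~ p y.
Proof. elim: n => //= n IH. case: ifP => h; first by apply: IH.
  have hn : find_lt p n = n. have := find_lt_le p n. lia.
  case: ifP => pn hy.
  - apply: IH; lia.
  - have : y <= n by lia. rewrite leq_eqVlt => /orP [/eqP ->|]; first by rewrite pn.
    rewrite -hn. exact: IH. Qed.
Lemma find_lt_eq (p : nat -> bool) n j : j < n -> p j -> (forall y, y < j -> ~~ p y) -> find_lt p n = j.
Proof. move=> jn pj hm. have h1 := find_lt_ex jn pj. have h2 := find_ltP h1.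
  case: (ltngtP (find_lt p n) j) => // h.
  - by move: (hm _ h); rewrite h2.
  - by move: (find_lt_min h); rewrite pj. Qed.
Section Shape.
Variables (k N : nat) (posf : nat -> nat -> nat).
Local Notation valid := (valid k N posf).
Local Notation jx := jx.
Local Notation Fj := (Fj k N posf).

Lemma drop_shape j q y : y < j -> drop y (nseq j true ++ false :: q) = true :: drop y.+1 (nseq j true ++ false :: q).
Proof. move=> yj. rewrite !drop_cat !size_nseq yj. case: ifP => h.
  - rewrite !drop_nseq. have -> : j - y = (j - y.+1).+1 by lia. by [].
  - have -> : y.+1 = j by lia. rewrite subnn drop_nseq /=. have -> : j - y = 1 by lia. by []. Qed.

Lemma jx_shape j q : jx (code (nseq j true ++ false :: q)) = j.
Proof. apply: find_lt_eq.
  - have := code_size (nseq j true ++ false :: q). rewrite size_cat size_nseq /=. lia.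
  - by rewrite tln_code drop_cat size_nseq ltnn subnn drop0 odd_code.
  - move=> y yj. by rewrite tln_code drop_shape // odd_code. Qed.

Lemma cqx_shape j q : cqx (code (nseq j true ++ false :: q)) = code q.
Proof. rewrite /cqx jx_shape tln_code drop_cat size_nseq ltnNge leqnSn /= subSn // subnn /=. by rewrite drop0. Qed.

Lemma shape_valid j q : size q = Fj j -> valid (code (nseq j true ++ false :: q)).
Proof. move=> hs. rewrite /valid jx_shape cqx_shape tln_code drop_cat size_nseq ltnn subnn drop0 odd_code /=.
  have := code_bounds q. by rewrite hs. Qed.

Lemma valid_shape p : valid (code p) -> exists j q, p = nseq j true ++ false :: q /\ size q = Fj j.
Proof.
rewrite /valid. set j := jx (code p). move=> /andP [/andP [hodd hlo] hhi].
rewrite tln_code in hodd.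
case E: (drop j p) hodd => [|b q]; first by [].
rewrite odd_code => /negPf hb. subst b.
have hjp : j < size p. { have : size (drop j p) > 0 by rewrite E. rewrite size_drop. lia. }
have htake : take j p = nseq j true.
  { suff : take j p = nseq (size (take j p)) true by rewrite size_take hjp.
    apply/all_pred1P. apply/(all_nthP false) => y hy. rewrite size_take hjp in hy.
    have := find_lt_min hy. rewrite -/j tln_code. rewrite nth_take //.
    rewrite (drop_nth false) /=. by rewrite odd_code negbK => /eqP. lia. }
exists j, q. split.
- by rewrite -[p](cat_take_drop j) htake E.
- apply: size_of_code. rewrite /cqx -/j tln_code in hlo hhi.
  have Eq : drop j.+1 p = q. by rewrite -add1n -drop_drop E /= drop0.
  by rewrite Eq in hlo hhi; rewrite hlo hhi.
Qed.

Lemma valid_prefix_free p p' r : valid (code p) -> valid (code p') -> p' = p ++ r -> p = p'.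
Proof.
move=> /valid_shape [j [q [-> hq]]] /valid_shape [j' [q' [-> hq']]] E.
have idx_shape : forall j q, index false (nseq j true ++ false :: q) = j.
  { move=> j0 q0. rewrite index_cat mem_nseq andbF size_nseq /=. by rewrite addn0. }
have ejj : j = j'.
  { have := congr1 (index false) E. rewrite -catA idx_shape.
    rewrite idx_shape. by []. }
subst j'. move: E. rewrite -catA /= => /eqP. rewrite eqseq_cat // eqxx /= eqseq_cons /= => /eqP Eq.
have : size q' = size (q ++ r) by rewrite Eq. rewrite size_cat hq hq' => hr.
have Er : r = [::] by apply/nilP; rewrite /nilp; lia.
by rewrite Eq Er cats0.
Qed.
End Shape.
Lemma bsum_mono f m n : m <= n -> bsum f m <= bsum f n.
Proof. elim: n => [|n IH]; first by rewrite leqn0 => /eqP ->.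
  rewrite leq_eqVlt => /orP [/eqP ->//|]. rewrite ltnS => /IH h /=. exact: leq_trans h (leq_addr _ _). Qed.
Lemma bsum_le f z n : z < n -> f z <= bsum f n.
Proof. elim: n => // n IH. rewrite ltnS leq_eqVlt => /orP [/eqP ->|/IH h] /=; first exact: leq_addl.
  exact: leq_trans h (leq_addr _ _). Qed.
Section Digits.
Variables (B : nat) (sel : nat -> bool) (d : nat -> nat).
Hypothesis B0 : 0 < B.
Definition cnt n := bsum (fun z => nat_of_bool (sel z)) n.
Definition sacc n := bsum (fun y => if sel y then d y * B ^ cnt y else 0) n.
Lemma sacc_lt n : (forall y, y < n -> sel y -> d y < B) -> sacc n < B ^ cnt n.
Proof. elim: n => [|n IH] hd /=; first by rewrite /sacc /cnt /= expn0.
  rewrite /sacc /cnt /= -/(sacc n) -/(cnt n).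
  have IH' := IH (fun y hy => hd y (ltnW hy)).
  case E: (sel n) => /=; last by rewrite !addn0.
  have hdn := hd n (ltnSn n) E. rewrite addn1 expnS.
  have : d n * B ^ cnt n <= (B - 1) * B ^ cnt n by rewrite leq_mul2r; apply/orP; right; lia.
  rewrite mulnBl mul1n. have : B ^ cnt n <= B * B ^ cnt n by rewrite leq_pmull.
  lia. Qed.
Lemma sacc_split m n : m <= n -> exists R, sacc n = sacc m + B ^ cnt m * R.
Proof. elim: n => [|n IH]; first by rewrite leqn0 => /eqP ->; exists 0; rewrite muln0 addn0.
  rewrite leq_eqVlt => /orP [/eqP ->|]; first by exists 0; rewrite muln0 addn0.
  rewrite ltnS => hmn. have [R HR] := IH hmn. rewrite /sacc /= -/(sacc n) HR.
  case E: (sel n); last by exists R; rewrite addn0.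
  have hc : cnt m <= cnt n by apply: bsum_mono hmn.
  exists (R + d n * B ^ (cnt n - cnt m)).
  rewrite mulnDr -addnA mulnCA -expnD subnKC //.
Qed.
Lemma sacc_digit n y : (forall y, y < n -> sel y -> d y < B) -> y < n -> sel y ->
  (sacc n %/ B ^ cnt y) %% B = d y.
Proof. move=> hd hy sy.
  have [R HR] := sacc_split hy. rewrite HR.
  rewrite /sacc /= -/(sacc y) sy /cnt /= -/(cnt y) sy expnD expn1.
  have hl := sacc_lt (fun z hz => hd z (ltn_trans hz hy)).
  have hB : 0 < B ^ cnt y by rewrite expn_gt0 B0.
  have -> : sacc y + d y * B ^ cnt y + B ^ cnt y * B * R = (d y + R * B) * B ^ cnt y + sacc y.
    rewrite mulnDl; lia.
  rewrite divnMDl // divn_small // addn0 addnC modnMDl modn_small //. exact: hd.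
Qed.
End Digits.
Lemma cnt_true n : cnt (fun _ => true) n = n.
Proof. elim: n => // n IH. rewrite /cnt /=. rewrite /cnt in IH. rewrite IH. by rewrite addn1. Qed.

Section Main.
Variables (k N : nat) (posf : nat -> nat -> nat) (alpha : nat -> bool) (wb : nat -> bool).
Hypothesis hk : 0 < k.
Hypothesis Hforb : forall t, exists2 r, r < k & alpha (posf (N + t) r) != wb r.
Hypothesis Hinj : forall n n' r r', r < k -> r' < k -> posf n r = posf n' r' -> n = n' /\ r = r'.

Definition wv := sacc 2 (fun _ => true) (fun r => nat_of_bool (wb r)) k.
Definition vt t := sacc 2 (fun _ => true) (fun r => nat_of_bool (alpha (posf (N + t) r))) k.
Local Notation aa := (aa k).

Lemma aa_gt0 : 0 < aa.
Proof. rewrite /aa. have : 2 ^ 1 <= 2 ^ k by rewrite leq_exp2l. lia. Qed.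

Lemma vt_lt t : vt t < 2 ^ k.
Proof. have := @sacc_lt 2 (fun _ => true) (fun r => nat_of_bool (alpha (posf (N + t) r))) (ltn0Sn 1) k.
  rewrite cnt_true. apply. by move=> y _ _; case: (alpha _). Qed.
Lemma wv_lt : wv < 2 ^ k.
Proof. have := @sacc_lt 2 (fun _ => true) (fun r => nat_of_bool (wb r)) (ltn0Sn 1) k.
  rewrite cnt_true. apply. by move=> y _ _; case: (wb _). Qed.
Lemma vt_bit t r : r < k -> (vt t %/ 2 ^ r) %% 2 = alpha (posf (N + t) r).
Proof. move=> hr. have := @sacc_digit 2 (fun _ => true) (fun r => nat_of_bool (alpha (posf (N + t) r))) (ltn0Sn 1) k r.
  rewrite cnt_true. move=> -> //. by move=> y _ _; case: (alpha _). Qed.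
Lemma wv_bit r : r < k -> (wv %/ 2 ^ r) %% 2 = wb r.
Proof. move=> hr. have := @sacc_digit 2 (fun _ => true) (fun r => nat_of_bool (wb r)) (ltn0Sn 1) k r.
  rewrite cnt_true. move=> -> //. by move=> y _ _; case: (wb _). Qed.
Lemma vt_ne t : vt t != wv.
Proof. have [r hr hne] := Hforb t. apply/eqP => E. move: hne.
  have := vt_bit t hr. rewrite E wv_bit //. by case: (wb r); case: (alpha _) => //= ->. Qed.

Definition dg v := if v < wv then v else v.-1.
Lemma undig_dg t : undig wv (dg (vt t)) = vt t.
Proof. have := vt_ne t. rewrite /dg /undig. move=> /eqP h2. case: (ltnP (vt t) wv) => h1.
  - by rewrite h1.
  - have -> : ((vt t).-1 < wv) = false by apply/negbTE; rewrite -leqNgt; lia.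
    lia. Qed.
Lemma dg_lt t : dg (vt t) < aa.
Proof. have := vt_ne t. have := vt_lt t. have := wv_lt. rewrite /dg /aa.
  case: (ltnP (vt t) wv) => h1 h2 h3 h4; move: h4 => /eqP h4; lia. Qed.

Definition Dn G := sacc aa (fun _ => true) (fun t => dg (vt t)) G.
Definition Vn G L := sacc 2 (fun y => ~~ cov k N posf G y) (fun y => nat_of_bool (alpha y)) L.
Definition Nn G L := Dn G + aa ^ G * Vn G L.

Lemma Dn_lt G : Dn G < aa ^ G.
Proof. have := @sacc_lt aa (fun _ => true) (fun t => dg (vt t)) aa_gt0 G.
  rewrite cnt_true. apply. move=> y _ _; exact: dg_lt. Qed.
Lemma Vn_lt G L : Vn G L < 2 ^ uu k N posf G L.
Proof. apply: sacc_lt => //. move=> y _ _; by case: (alpha y). Qed.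
Lemma Nn_mod G L : Nn G L %% aa ^ G = Dn G.
Proof. rewrite /Nn addnC mulnC modnMDl modn_small //. exact: Dn_lt. Qed.
Lemma Nn_div G L : Nn G L %/ aa ^ G = Vn G L.
Proof. rewrite /Nn addnC mulnC divnMDl ?expn_gt0 ?aa_gt0 // divn_small ?addn0 //. exact: Dn_lt. Qed.

Lemma bitv_ok G L y : y < L -> bitv k N wv posf G (Nn G L) y = alpha y.
Proof. move=> hy. rewrite /bitv. case C: (cov k N posf G y).
- move: C. rewrite /cov. set z := idx k N posf G y => hz.
  have pzz : pz k N posf z = y by apply/eqP; exact: (find_ltP hz).
  have ht : z %/ k < G by rewrite ltn_divLR.
  have hr : z %% k < k by rewrite ltn_pmod.
  rewrite Nn_mod.
  have := @sacc_digit aa (fun _ => true) (fun t => dg (vt t)) aa_gt0 G (z %/ k) (fun y _ _ => dg_lt y) ht erefl.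
  rewrite cnt_true => ->. rewrite undig_dg vt_bit //. by rewrite -pzz.
- rewrite Nn_div.
  have := @sacc_digit 2 (fun y => ~~ cov k N posf G y) (fun y => nat_of_bool (alpha y)) (ltn0Sn 1) L y _ hy.
  rewrite C => -> //. move=> y' _ _; by case: (alpha y').
Qed.

Lemma bsum_count (P : pred nat) n : bsum (fun y => nat_of_bool (P y)) n = count P (iota 0 n).
Proof. elim: n => [|n IH]; first by [].
  transitivity (bsum (fun y => nat_of_bool (P y)) n + P n); first by [].
  by rewrite IH -addn1 iotaD count_cat /= addn0. Qed.

Lemma count_cov G L : (forall z, z < G * k -> pz k N posf z < L) -> uu k N posf G L + G * k <= L.
Proof. move=> hpz.
  rewrite /uu bsum_count.
  have h1 := count_predC (cov k N posf G) (iota 0 L). rewrite size_iota in h1.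
  suff : G * k <= count (cov k N posf G) (iota 0 L).
    move: h1. have -> : count (predC (cov k N posf G)) (iota 0 L) = count (fun y => ~~ cov k N posf G y) (iota 0 L) by []. lia.
  rewrite -size_filter.
  have -> : G * k = size (map (pz k N posf) (iota 0 (G * k))) by rewrite size_map size_iota.
  apply: uniq_leq_size.
  - rewrite map_inj_in_uniq ?iota_uniq // => z z' _ _ E.
    have := Hinj (ltn_pmod z hk) (ltn_pmod z' hk) E. move=> [e1 e2].
    rewrite (divn_eq z k) (divn_eq z' k) e2. have -> : z %/ k = z' %/ k by lia. by [].
  - move=> x /mapP [z]. rewrite mem_iota add0n => /andP [_ hz] ->.
    rewrite mem_filter mem_iota add0n hpz // andbT /cov /idx.
    rewrite andbT. apply: (@find_lt_ex (fun z0 => pz k N posf z0 == pz k N posf z) _ z hz). by rewrite eqxx.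
Qed.

Lemma bern b n : b ^ n * (b + n) <= (b + 1) ^ n * b.
Proof. elim: n => [|n IH]; first by rewrite !expn0 addn0.
  rewrite !expnS. have : b ^ n * (b + n) * (b + 1) <= (b + 1) ^ n * b * (b + 1) by rewrite leq_mul2r IH orbT.
  set u := b ^ n. set v := (b + 1) ^ n. move=> h.
  have h2 : b * u * (b + n.+1) <= u * (b + n) * (b + 1).
    have -> : u * (b + n) * (b + 1) = b * u * (b + n.+1) + u * n by rewrite !mulnDr !mulnDl; lia.
    exact: leq_addr.
  have -> : (b + 1) * v * b = v * b * (b + 1) by rewrite [_ * v]mulnC -mulnA [(b+1) * b]mulnC mulnA.
  exact: leq_trans h2 h. Qed.

Lemma outh_ok x L j : jx x = j -> Lj k N posf j = L ->
  (forall y, y < L -> bitx k N wv posf x y = alpha y) ->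
  forall s0, s0 <= L -> outh k N wv posf s0 x = code (map alpha (iota (L - s0) s0)).
Proof. move=> hj hL hbit. elim=> [|s0 IH] hs; first by [].
  rewrite /= hj hL IH; last by lia.
  have -> : L - s0 = (L - s0.+1).+1 by lia.
  rewrite hbit; last by lia.
  by case: (alpha _) => /=; rewrite -addnA.
Qed.

Lemma encode j : exists p, [/\ size p + j + 1 = Lj k N posf j, valid k N posf (code p) &
   dec k N wv posf (code p) = code (map alpha (iota 0 (Lj k N posf j)))].
Proof.
set G := Gj k j. set L := Lj k N posf j. set s := sj j.
have hpz : forall z, z < G * k -> pz k N posf z < L.
  move=> z hz. rewrite /L /Lj ltnS. exact: bsum_le.
have hcnt := count_cov hpz.
have haa := aa_gt0.
have hb : aa ^ G * 2 ^ s <= 2 ^ (k * G).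
  have hB := bern aa G.
  have e1 : aa + G = aa * 2 ^ s.
    rewrite /G /Gj -/s. have : 0 < 2 ^ s by rewrite expn_gt0. move: (2 ^ s) => e he.
    rewrite mulnBr muln1. have : aa <= aa * e by rewrite leq_pmulr. lia.
  have e2 : aa + 1 = 2 ^ k. rewrite /aa. have : 0 < 2 ^ k by rewrite expn_gt0. lia.
  rewrite e1 e2 -expnM mulnA in hB. by rewrite -(leq_pmul2r haa) mulnAC.
have hag : 0 < aa ^ G by rewrite expn_gt0 haa.
have hs : s <= k * G.
  rewrite -(leq_exp2l _ _ (ltnSn 1)). apply: leq_trans hb. by rewrite leq_pmull.
have hsL : s <= L. have : k * G = G * k by rewrite mulnC. lia.
set F := Fj k N posf j.
have hF : F = L - s by [].
have hN : Nn G L < 2 ^ F.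
  have h1 : Nn G L < aa ^ G * 2 ^ uu k N posf G L.
    rewrite /Nn. have := Dn_lt G. have := Vn_lt G L. move: (Dn G) (Vn G L) (2 ^ uu k N posf G L) => D V U hV hD.
    have : aa ^ G * V.+1 <= aa ^ G * U by rewrite leq_mul2l hV orbT. rewrite mulnS. lia.
  apply: (leq_trans h1). rewrite -(leq_pmul2r (expn_gt0 2 s)) -expnD hF subnK //.
  have h2 : aa ^ G * 2 ^ uu k N posf G L * 2 ^ s <= 2 ^ (k * G) * 2 ^ uu k N posf G L.
    by rewrite mulnAC leq_mul2r hb orbT.
  apply: (leq_trans h2). rewrite -expnD leq_exp2l //. rewrite [k * G]mulnC. lia.
have [q [hq1 hq2]] := code_exists hN.
exists (nseq j true ++ false :: q). split.
- rewrite size_cat size_nseq /= hq1 hF /s /sj. move: hsL. rewrite /s /sj. lia.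
- exact: shape_valid.
- set x := code _.
  have hj : jx x = j by apply: jx_shape.
  have hNn : Nnx k N posf x = Nn G L.
    by rewrite /Nnx hj cqx_shape hq2 -/F addKn.
  rewrite /dec hj -/L. rewrite (@outh_ok x L j hj erefl) ?subnn //.
  move=> y hy. rewrite /bitx hj hNn -/G. exact: bitv_ok.
Qed.
End Main.
From Stdlib Require Import Classical.

Lemma Rf_nth_slots (T : eqType) (sl : seq T) (g : T -> nat -> nat) :
  (forall s, s \in sl -> Rf (fun xs => g s (a 0 xs))) ->
  Rf (fun xs => List.nth (a 1 xs) [seq g s (a 0 xs) | s <- sl] 0).
Proof.
elim: sl => [|s sl IH] H.
- apply: (Rf_ext _ (Rf_const 0)) => xs. by case: (a 1 xs).
- have H1 := H s (mem_head _ _).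
  have H2 : Rf (fun xs => List.nth (a 1 xs) [seq g s (a 0 xs) | s <- sl] 0).
    apply: IH => s' hs'. apply: H. by rewrite in_cons hs' orbT.
  have H3 : Rf (fun xs => List.nth (a 1 xs).-1 [seq g s (a 0 xs) | s <- sl] 0).
    apply: (@Rf_app2 (fun u v => List.nth v [seq g s u | s <- sl] 0) (a 0) (fun xs => (a 1 xs).-1) H2 (Rf_proj 0)).
    apply: Rf_pred. exact: Rf_proj.
  apply: (Rf_ext _ (Rf_if (B := fun xs => a 1 xs == 0) (Rf_eqb (Rf_proj 1) (Rf_const 0)) H1 H3)) => xs.
  by case: (a 1 xs).
Qed.

Lemma Rf_psi l (psi : nat -> nat -> nat -> nat) (hpsi : recursive_bijection3 l psi) c m (hc : c < l.-1) :
  Rf (fun xs => psi c (a 0 xs) m) /\ Rf (fun xs => psi c m (a 0 xs)).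
Proof.
have [[t Ht] _] := hpsi.
have [ts1 H1] := Rfs_cons (Rf_const c) (Rfs_cons (Rf_proj 0) (Rfs_cons (Rf_const m) Rfs_nil)).
have [ts2 H2] := Rfs_cons (Rf_const c) (Rfs_cons (Rf_const m) (Rfs_cons (Rf_proj 0) Rfs_nil)).
split.
- exists (Comp t ts1) => xs. econstructor; [exact: H1|exact: Ht].
- exists (Comp t ts2) => xs. econstructor; [exact: H2|exact: Ht].
Qed.
Lemma inP (T : eqType) (x : T) s : List.In x s <-> x \in s.
Proof. elim: s => [|y s IH] //=. rewrite in_cons IH. split.
  - by case=> [->|->]; rewrite ?eqxx ?orbT.
  - by case/orP => [/eqP ->|]; [left|right]. Qed.
Lemma lnth_nth (T : Type) (s : seq T) n d : List.nth n s d = nth d s n.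
Proof. by elim: s n => [|x s IH] [|n] //=. Qed.
Lemma leq_sumn_mem x s : x \in s -> x <= sumn s.
Proof. elim: s => //= y s IH. rewrite in_cons => /orP [/eqP ->|/IH h]; first exact: leq_addr.
  exact: leq_trans h (leq_addl _ _). Qed.
Lemma lmap_map (A B : Type) (f : A -> B) s : List.map f s = map f s.
Proof. by elim: s => //= x s ->. Qed.
Lemma lseq_iota a n : List.seq a n = iota a n.
Proof. by elim: n a => //= n IH a; rewrite IH. Qed.

Theorem theorem4 (l : nat) (hl : 2 <= l) (psi : nat -> nat -> nat -> nat)
  (hpsi : recursive_bijection3 l psi)
  (U : term) (hU : universal_prefix U)
  (alpha : nat -> bool) (halpha : KC_complex U alpha) :
  @model_T l (A_l l) (@level l) (@S_alpha l psi alpha).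
Proof.
split; [|split; [|split]].
- move=> x. exists x.1; split; [exact: ltn_ord|by []].
- move=> x i j hij hjl [h1 h2]. rewrite /level in h1 h2. lia.
- move=> x y i [i0 [_ [e1 [e2 _]]]] hx _. rewrite /level in hx *. lia.
move=> i hi X Y Z X' Y' hX hY hXY hZ hX' hY' hXY'.
apply: NNPP => Hno.
pose g (s : nat * nat * bool * bool) n := if s.1.2 then psi s.1.1.1 n s.1.1.2 else psi s.1.1.1 s.1.1.2 n.
pose raw := [seq (i, x.2, true, true) | x <- X] ++ [seq (i, y.2, true, false) | y <- Y] ++
            [seq (i.-1, x.2, false, true) | x <- X'] ++ [seq (i.-1, y.2, false, false) | y <- Y'].
pose sl := undup raw.
pose k := size sl.
pose def := (0, 0, false, false).
pose posf n r := List.nth r [seq g s n | s <- sl] 0.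
pose wb r := (nth def sl r).2.
pose N := (sumn [seq z.2 | z <- Z]).+1.
have Fc : forall s, s \in sl -> [/\ s.1.1.1 < l.-1, s.1.1.1 = (if s.1.2 then i else i.-1) & (~~ s.1.2 -> 0 < i)].
  move=> s. rewrite mem_undup !mem_cat => /or4P [] /mapP [x /inP hx ->] /=.
  + have [h1 h2] := hX _ hx. split => //. lia.
  + have [h1 h2] := hY _ hx. split => //. lia.
  + move: (hX' _ hx). rewrite /below. case E: i => [|i'] //= h. rewrite /level in h.
    split => //. lia.
  + move: (hY' _ hx). rewrite /below. case E: i => [|i'] //= h. rewrite /level in h.
    split => //. lia.
have lvl_eq : forall (x y : A_l l) j, level j x -> level j y -> x.2 = y.2 -> x = y.
  move=> [x1 x2] [y1 y2] j /= h1 h2 /= e. rewrite /level /= in h1 h2.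
  have : x1 = y1 by apply: val_inj; rewrite /= h1 h2. by move=> ->; rewrite e.
have Fm : forall s s', s \in sl -> s' \in sl -> s.1.2 = s'.1.2 -> s.1.1.2 = s'.1.1.2 -> s = s'.
  move=> s s'. rewrite !mem_undup !mem_cat => /or4P [] /mapP [x /inP hx ->] /or4P [] /mapP [y /inP hy ->] //= _ e;
    rewrite ?e //; exfalso.
  + have [_ h1] := hX _ hx. have [_ h2] := hY _ hy. apply: (hXY x hx). by rewrite (lvl_eq _ _ _ h1 h2 e).
  + have [_ h1] := hY _ hx. have [_ h2] := hX _ hy. apply: (hXY y hy). by rewrite -(lvl_eq _ _ _ h1 h2 e).
  + have h1 := hX' _ hx. have h2 := hY' _ hy. move: h1 h2. rewrite /below. case: (i) => [|i'] //= h1 h2.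
    apply: (hXY' x hx). by rewrite (lvl_eq _ _ _ h1 h2 e).
  + have h1 := hY' _ hx. have h2 := hX' _ hy. move: h1 h2. rewrite /below. case: (i) => [|i'] //= h1 h2.
    apply: (hXY' y hy). by rewrite -(lvl_eq _ _ _ h1 h2 e).
have posfE : forall n r, r < k -> posf n r = g (nth def sl r) n.
  move=> n r hr. by rewrite /posf lnth_nth (nth_map def).
have Hinj : forall n n' r r', r < k -> r' < k -> posf n r = posf n' r' -> n = n' /\ r = r'.
  move=> n n' r r' hr hr'. rewrite !posfE //.
  have ms := mem_nth def hr. have ms' := mem_nth def hr'.
  have [c1 c2 c3] := Fc _ ms. have [c1' c2' c3'] := Fc _ ms'.
  have [_ [hinj _]] := hpsi.
  have fin : nth def sl r = nth def sl r' -> r = r'.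
    move=> E. by apply/eqP; rewrite -(nth_uniq def hr hr' (undup_uniq raw)) E.
  rewrite /g. move: (Fm _ _ ms ms') fin c1 c2 c3 c1' c2' c3'.
  case: (nth def sl r) => [[[c m] d] w]; case: (nth def sl r') => [[[c' m'] d'] w'] /= hF fin.
  case: d hF fin => hF fin c1 c2 c3; case: d' hF fin => hF fin c1' c2' c3' /= E;
    have [e1 e2 e3] := hinj _ _ _ _ _ _ c1 c1' E.
  + split => //. apply: fin. by apply: hF.
  + have := c3' erefl. lia.
  + have := c3 erefl. lia.
  + split => //. apply: fin. by apply: hF.
have slot_idx : forall s, s \in sl -> exists2 r, r < k & nth def sl r = s.
  move=> s hs. exists (index s sl); [by rewrite index_mem|exact: nth_index].
have hN : forall z, List.In z Z -> z.2 < N.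
  move=> z /inP hz. rewrite /N ltnS. apply: leq_sumn_mem. apply/mapP; by exists z.
have Hforb : forall t, exists2 r, r < k & alpha (posf (N + t) r) != wb r.
  move=> t. apply: NNPP => Hc. apply: Hno.
  have Hall : forall r, r < k -> alpha (posf (N + t) r) = wb r.
    move=> r hr. apply/eqP. apply: negbNE. apply/negP => hne. apply: Hc. by exists r.
  have Hs : forall s, s \in sl -> alpha (g s (N + t)) = s.2.
    move=> s hs. have [r hr <-] := slot_idx s hs. rewrite -posfE //. exact: Hall.
  exists (Ordinal hi, N + t). split; first by []. split.
    move=> hz. have := hN _ hz. rewrite /=. lia.
  split; [|split; [|split]].
  - move=> x hx. have [h1 h2] := hX _ hx. exists i. split; first lia. split; first by []. split; first exact h2.
    have H : (i, x.2, true, true) \in sl.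
      rewrite mem_undup mem_cat; apply/orP; left; apply/mapP; exists x => //; exact/inP.
    have := Hs _ H. by rewrite /g /=.
  - move=> x hx.
    have [i' E h] : exists2 i', i = i'.+1 & level i' x.
      move: (hX' _ hx). rewrite /below. case: (i) => [|i'] //= h. by exists i'.
    rewrite /level in h.
    have H : (i.-1, x.2, false, true) \in sl.
      rewrite mem_undup !mem_cat; apply/or4P; apply: Or43; apply/mapP; exists x => //; exact/inP.
    have H2 := Hs _ H. rewrite /g /= E /= in H2.
    exists i'. split; first lia. split; first by []. split; first exact: E.
    exact: H2.
  - move=> y hy [i0 [h0 [e1 [e2 e3]]]].
    have H : (i, y.2, true, false) \in sl.
      rewrite mem_undup !mem_cat; apply/or4P; apply: Or42; apply/mapP; exists y => //; exact/inP.
    have H2 := Hs _ H. rewrite /g /= in H2 e1 e3. subst i0. by rewrite H2 in e3.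
  - move=> y hy [i0 [h0 [e1 [e2 e3]]]].
    have H : (i.-1, y.2, false, false) \in sl.
      rewrite mem_undup !mem_cat; apply/or4P; apply: Or44; apply/mapP; exists y => //; exact/inP.
    have H2 := Hs _ H. rewrite /g /= in H2 e2 e3. have E : i.-1 = i0 by lia. rewrite E in H2. by rewrite H2 in e3.
have hk : 0 < k. by have [r hr _] := Hforb 0; lia.
have Hpos : Rf (fun xs => posf (a 0 xs) (a 1 xs)).
  apply: Rf_nth_slots => s hs. have [c1 _ _] := Fc _ hs.
  have [R1 R2] := Rf_psi hpsi s.1.1.2 c1. rewrite /g. by case: (s.1.2).
have [M HM] := @exists_M k N (wv k wb) posf Hpos.
have pfM : prefix_free M.
  move=> p q s s' h1 h2 [r Er]. have [v1 _] := (HM _ _).1 h1. have [v2 _] := (HM _ _).1 h2.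
  exact: (valid_prefix_free v1 v2 Er).
have [rho Hrho] := hU.2 M pfM.
have [m Hm] := halpha.
have [p [hs hv hd]] := @encode k N posf alpha wb hk Hforb Hinj (size rho + m).
set L := Lj k N posf (size rho + m) in hs hd.
have hrun : runs M p (Defs.prefix alpha L).
  rewrite /runs /Defs.prefix lmap_map lseq_iota. apply/HM. by rewrite hd.
have := Hm L (rho ++ p) ((Hrho _ _).1 hrun). rewrite size_cat. lia.
Qed.
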